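(* For every positive integer $h$, there is a protocol solving MEQ-AD$(3,6^h)$ with communication complexity $h\log_2 27$; in particular $C_{AD}(3,6^h)\le h\log_2 27$.
   Context: There are $n$ nodes labeled $1,\dots,n$ (here $n=3$); node $i$ privately holds an input $x_i\in\{1,\dots,M\}$. Communication is over private point-to-point links of a fully connected synchronous network. A deterministic protocol $P$ is a fixed finite schedule of steps $l=1,\dots,L(P)$; in step $l$ a prescribed node $T_l$ sends to a prescribed node $R_l\neq T_l$ one symbol $f_l(x_{T_l},T_l^+(l))$, where $T_l^+(l)$ is the sequence of symbols $T_l$ has received in steps $1,\dots,l-1$; only $R_l$ receives it. Its complexity is $C(P)=\sum_{l}\log_2 S_l(P)$, with $S_l(P)$ the number of distinct values of the step-$l$ symbol over all inputs in $\{1,\dots,M\}^n$. At the end each node $i$ outputs a bit $EQ_i$ depending on $x_i$ and the symbols it received. $P$ solves MEQ-AD$(n,M)$ if for every input, $EQ_1=\cdots=EQ_n=0$ iff $x_1=\cdots=x_n$. $C_{AD}(n,M)$ is the infimum of $C(P)$ over protocols solving MEQ-AD$(n,M)$. *)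

(* Defs.v *)
From Stdlib Require Import Reals List Arith Lia.
Import ListNotations.
Open Scope R_scope.

(* Nodes are labelled 1..n; symbols are natural numbers. An input is a list
   xs = [x_1; ...; x_n]; node i holds nth (i-1) xs. *)
Definition inp (xs : list nat) (i : nat) : nat := nth (i - 1) xs 0%nat.

(* One step: transmitter T, receiver R, and the symbol function
   f (x_T) (symbols received so far by T, in order). *)
Record step := mkStep {
  stT : nat;
  stR : nat;
  stf : nat -> list nat -> nat
}.

(* A protocol: a finite schedule of steps plus, for each node i, an output
   map EQ_i = out i x_i (symbols received by i); bit 0 is [false]. *)
Record protocol := mkProtocol {
  steps : list step;
  out : nat -> nat -> list nat -> bool
}.

(* History: list of (receiver, symbol) for the steps executed so far. *)
Definition recv (i : nat) (hist : list (nat * nat)) : list nat :=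
  map snd (filter (fun p => Nat.eqb (fst p) i) hist).

Fixpoint run_from (ss : list step) (xs : list nat) (hist : list (nat * nat))
  : list (nat * nat) :=
  match ss with
  | [] => hist
  | s :: ss' =>
      let m := stf s (inp xs (stT s)) (recv (stT s) hist) in
      run_from ss' xs (hist ++ [(stR s, m)])
  end.

Definition run (P : protocol) (xs : list nat) : list (nat * nat) :=
  run_from (steps P) xs [].

(* The symbol sent at step l (0-based index). *)
Definition symbol (P : protocol) (xs : list nat) (l : nat) : nat :=
  snd (nth l (run P xs) (0%nat, 0%nat)).

Definition EQ (P : protocol) (xs : list nat) (i : nat) : bool :=
  out P i (inp xs i) (recv i (run P xs)).

Fixpoint all_inputs (n M : nat) : list (list nat) :=
  match n with
  | O => [[]]
  | S n' => flat_map (fun xs => map (fun v => v :: xs) (seq 1 M)) (all_inputs n' M)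
  end.

Definition valid_input (n M : nat) (xs : list nat) : Prop :=
  length xs = n /\ Forall (fun v => (1 <= v <= M)%nat) xs.

Definition S_l (n M : nat) (P : protocol) (l : nat) : nat :=
  length (nodup Nat.eq_dec (map (fun xs => symbol P xs l) (all_inputs n M))).

Definition log2R (r : R) : R := ln r / ln 2.

Definition complexity (n M : nat) (P : protocol) : R :=
  fold_right Rplus 0 (map (fun l => log2R (INR (S_l n M P l))) (seq 0 (length (steps P)))).

Definition well_formed (n : nat) (P : protocol) : Prop :=
  Forall (fun s => (1 <= stT s <= n)%nat /\ (1 <= stR s <= n)%nat /\ stT s <> stR s)
         (steps P).

Definition solves_MEQ_AD (n M : nat) (P : protocol) : Prop :=
  well_formed n P /\
  forall xs, valid_input n M xs ->
    ((forall i, (1 <= i <= n)%nat -> EQ P xs i = false) <->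
     (forall i j, (1 <= i <= n)%nat -> (1 <= j <= n)%nat -> inp xs i = inp xs j)).

(* C_AD(n,M) <= c, with C_AD the infimum (greatest lower bound) of the
   complexities of solving protocols. *)
Definition is_glb_R (E : R -> Prop) (r : R) : Prop :=
  (forall y, E y -> r <= y) /\ (forall b, (forall y, E y -> b <= y) -> b <= r).

Definition C_AD_le (n M : nat) (c : R) : Prop :=
  forall r, is_glb_R (fun y => exists P, solves_MEQ_AD n M P /\ y = complexity n M P) r ->
            r <= c.

(* Main.v *)
Require Import Defs.
From Stdlib Require Import Reals List Arith Lia Lra.
Import ListNotations.
Local Open Scope nat_scope.

Definition dig (d v : nat) : nat := ((v - 1) / 6 ^ d) mod 6.
Definition fA (a : nat) : nat :=
  match a with 0 => 0 | 1 => 1 | 2 => 0 | 3 => 2 | 4 => 1 | _ => 2 end.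
Definition fB (a : nat) : nat :=
  match a with 0 => 1 | 1 => 0 | 2 => 2 | 3 => 0 | 4 => 2 | _ => 1 end.
Definition fH (a : nat) : nat :=
  match a with 0 => 2 | 1 => 2 | 2 => 1 | 3 => 1 | 4 => 0 | _ => 0 end.
Definition phi (k a : nat) : nat := match k with 0 => fA a | 1 => fB a | _ => fH a end.
Definition rcv (k : nat) : nat := match k with 0 => 2 | 1 => 3 | _ => 1 end.
Definition stepk (k d : nat) : step := mkStep (S k) (rcv k) (fun v _ => phi k (dig d v)).
Definition stepsL (h : nat) : list step :=
  map (stepk 0) (seq 0 h) ++ map (stepk 1) (seq 0 h) ++ map (stepk 2) (seq 0 h).
Definition expk (i : nat) : nat := match i with 2 => 0 | 3 => 1 | _ => 2 end.
Definition outF (h i v : nat) (r : list nat) : bool :=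
  if list_eq_dec Nat.eq_dec r (map (fun d => phi (expk i) (dig d v)) (seq 0 h))
  then false else true.
Definition Prot (h : nat) : protocol := mkProtocol (stepsL h) (outF h).

Definition msg (xs : list nat) (s : step) : nat * nat :=
  (stR s, stf s (inp xs (stT s)) []).

Lemma run_eq : forall ss xs hist,
  (forall s, In s ss -> forall v l, stf s v l = stf s v []) ->
  run_from ss xs hist = hist ++ map (msg xs) ss.
Proof.
  induction ss as [|s ss IH]; intros xs hist H; simpl.
  - now rewrite app_nil_r.
  - rewrite IH by (intros; apply H; simpl; auto).
    rewrite <- app_assoc. simpl. unfold msg. rewrite (H s (or_introl eq_refl)). reflexivity.
Qed.

Lemma stepsL_ind : forall h s, In s (stepsL h) -> forall v l, stf s v l = stf s v [].
Proof.
  intros h s Hs v l. unfold stepsL in Hs.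
  repeat rewrite in_app_iff in Hs.
  destruct Hs as [Hs|[Hs|Hs]]; apply in_map_iff in Hs; destruct Hs as [d [<- _]]; reflexivity.
Qed.

Lemma run_Prot : forall h xs, run (Prot h) xs = map (msg xs) (stepsL h).
Proof. intros. unfold run. simpl. apply run_eq. apply stepsL_ind. Qed.

Lemma filt : forall k i xs l,
  filter (fun p => Nat.eqb (fst p) i) (map (msg xs) (map (stepk k) l)) =
  if Nat.eqb (rcv k) i then map (msg xs) (map (stepk k) l) else [].
Proof.
  induction l as [|a l IH]; simpl.
  - destruct (Nat.eqb (rcv k) i); reflexivity.
  - rewrite IH. unfold msg at 1. simpl. destruct (Nat.eqb (rcv k) i); reflexivity.
Qed.

Lemma recv_run : forall h xs i, 1 <= i <= 3 ->
  recv i (run (Prot h) xs) = map (fun d => phi (expk i) (dig d (inp xs (S (expk i))))) (seq 0 h).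
Proof.
  intros h xs i Hi. rewrite run_Prot. unfold recv, stepsL.
  rewrite !map_app, !filter_app, !filt.
  assert (Hc : i = 1 \/ i = 2 \/ i = 3) by lia.
  destruct Hc as [ Hc | [ Hc | Hc ] ]; subst i; simpl;
  rewrite ?app_nil_r; rewrite !map_map; reflexivity.
Qed.

Lemma digits_eq : forall h a b, a < 6 ^ h -> b < 6 ^ h ->
  (forall d, d < h -> (a / 6 ^ d) mod 6 = (b / 6 ^ d) mod 6) -> a = b.
Proof.
  induction h as [|h IH]; intros a b Ha Hb Hd.
  - simpl in *. lia.
  - assert (E0 := Hd 0 ltac:(lia)). rewrite Nat.pow_0_r, !Nat.div_1_r in E0.
    assert (a / 6 = b / 6).
    { apply IH.
      - apply Nat.Div0.div_lt_upper_bound. simpl in Ha. lia.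
      - apply Nat.Div0.div_lt_upper_bound. simpl in Hb. lia.
      - intros d Hdl. rewrite !Nat.Div0.div_div.
        replace (6 * 6 ^ d) with (6 ^ S d) by reflexivity. apply Hd. lia. }
    rewrite (Nat.div_mod a 6), (Nat.div_mod b 6) by lia. lia.
Qed.

Lemma finite_check : forall a b c, a < 6 -> b < 6 -> c < 6 ->
  fA a = fA b -> fB b = fB c -> fH c = fH a -> a = b /\ b = c.
Proof.
  intros a b c Ha Hb Hc.
  assert (a = 0 \/ a = 1 \/ a = 2 \/ a = 3 \/ a = 4 \/ a = 5) as Ea by lia.
  assert (b = 0 \/ b = 1 \/ b = 2 \/ b = 3 \/ b = 4 \/ b = 5) as Eb by lia.
  assert (c = 0 \/ c = 1 \/ c = 2 \/ c = 3 \/ c = 4 \/ c = 5) as Ec by lia.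
  destruct Ea as [E|[E|[E|[E|[E|E]]]]]; subst a;
  destruct Eb as [E|[E|[E|[E|[E|E]]]]]; subst b;
  destruct Ec as [E|[E|[E|[E|[E|E]]]]]; subst c; simpl; intros; lia.
Qed.

Lemma map_eq_pt : forall (f g : nat -> nat) l, map f l = map g l -> forall x, In x l -> f x = g x.
Proof.
  induction l as [|a l IH]; simpl; intros E x Hx; [contradiction|].
  injection E as E1 E2. destruct Hx as [<-|Hx]; auto.
Qed.

Lemma in_all_inputs : forall M xs, Forall (fun v => 1 <= v <= M) xs ->
  In xs (all_inputs (length xs) M).
Proof.
  intros M xs H. induction H as [|v xs Hv Hxs IH]; simpl; [auto|].
  apply in_flat_map. exists xs. split; auto.
  apply in_map_iff. exists v. split; auto. apply in_seq. lia.
Qed.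

Lemma count3 : forall (phi0 : list nat -> nat) L,
  (forall xs, phi0 xs < 3) -> (forall k, k < 3 -> exists xs, In xs L /\ phi0 xs = k) ->
  length (nodup Nat.eq_dec (map phi0 L)) = 3.
Proof.
  intros phi0 L Hb Hs.
  assert (ND := NoDup_nodup Nat.eq_dec (map phi0 L)).
  assert (I1 : incl (nodup Nat.eq_dec (map phi0 L)) [0;1;2]).
  { intros x Hx. apply nodup_In, in_map_iff in Hx. destruct Hx as [y [<- _]].
    specialize (Hb y). simpl. lia. }
  assert (I2 : incl [0;1;2] (nodup Nat.eq_dec (map phi0 L))).
  { intros x Hx. apply nodup_In. assert (x < 3) by (simpl in Hx; lia).
    destruct (Hs x H) as [y [Hy Ey]]. apply in_map_iff. eauto. }
  apply NoDup_incl_length in I1; auto.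
  apply NoDup_incl_length in I2.
  - simpl in *. lia.
  - repeat constructor; simpl; lia.
Qed.

Lemma phi_lt : forall k a, phi k a < 3.
Proof.
  intros k a. destruct k as [|[|k]]; simpl;
  do 5 (destruct a as [|a]; [simpl; lia|]); simpl; lia.
Qed.

Lemma phi_surj : forall k c, c < 3 -> exists a, a < 6 /\ phi k a = c.
Proof.
  intros k c Hc.
  assert (c = 0 \/ c = 1 \/ c = 2) as [E|[E|E]] by lia; subst c;
  destruct k as [|[|k]];
  first [exists 0; simpl; split; [lia|reflexivity]
        |exists 1; simpl; split; [lia|reflexivity]
        |exists 2; simpl; split; [lia|reflexivity]
        |exists 3; simpl; split; [lia|reflexivity]
        |exists 4; simpl; split; [lia|reflexivity]].
Qed.

Lemma S_stepk : forall h k d, k < 3 -> d < h ->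
  length (nodup Nat.eq_dec (map (fun xs => snd (msg xs (stepk k d))) (all_inputs 3 (6 ^ h)))) = 3.
Proof.
  intros h k d Hk Hd. apply count3.
  - intros xs. apply phi_lt.
  - intros c Hc. destruct (phi_surj k c Hc) as [a [Ha Ea]].
    set (y := 1 + 6 ^ d * a).
    assert (P1 : 1 <= 6 ^ d) by (apply Nat.le_succ_l, Nat.neq_0_lt_0, Nat.pow_nonzero; lia).
    assert (P2 : 6 ^ S d <= 6 ^ h) by (apply Nat.pow_le_mono_r; lia).
    assert (P3 : 6 ^ S d = 6 * 6 ^ d) by reflexivity.
    assert (Hy : 1 <= y <= 6 ^ h) by (unfold y; nia).
    exists [y; y; y]. split.
    + apply (in_all_inputs (6 ^ h) [y;y;y]).
      repeat (apply Forall_cons; [exact Hy|]); apply Forall_nil.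
    + unfold msg, stepk; simpl.
      assert (inp [y;y;y] (S k) = y) as ->.
      { unfold inp. assert (k = 0 \/ k = 1 \/ k = 2) as [E|[E|E]] by lia; subst k; reflexivity. }
      unfold dig. unfold y. replace (1 + 6 ^ d * a - 1) with (a * 6 ^ d) by lia.
      rewrite Nat.div_mul by lia. rewrite Nat.mod_small by lia. exact Ea.
Qed.

Lemma len_steps : forall h, length (stepsL h) = 3 * h.
Proof. intros. unfold stepsL. rewrite !length_app, !length_map, !length_seq. lia. Qed.

Lemma nth_steps : forall h l, l < 3 * h ->
  exists k d, k < 3 /\ d < h /\ nth l (stepsL h) (stepk 0 0) = stepk k d.
Proof.
  intros h l Hl. unfold stepsL.
  destruct (Nat.lt_ge_cases l h) as [H1|H1].
  - exists 0, l. rewrite app_nth1 by (rewrite length_map, length_seq; lia).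
    rewrite (map_nth (stepk 0) (seq 0 h) 0 l), seq_nth by lia. auto.
  - rewrite app_nth2 by (rewrite length_map, length_seq; lia).
    rewrite length_map, length_seq.
    destruct (Nat.lt_ge_cases (l - h) h) as [H2|H2].
    + exists 1, (l - h). rewrite app_nth1 by (rewrite length_map, length_seq; lia).
      rewrite (nth_indep _ (stepk 0 0) (stepk 1 0)) by (rewrite length_map, length_seq; lia).
      rewrite (map_nth (stepk 1) (seq 0 h) 0), seq_nth by lia. repeat split; auto; lia.
    + exists 2, (l - h - h). rewrite app_nth2 by (rewrite length_map, length_seq; lia).
      rewrite length_map, length_seq.
      rewrite (nth_indep _ (stepk 0 0) (stepk 2 0)) by (rewrite length_map, length_seq; lia).
      rewrite (map_nth (stepk 2) (seq 0 h) 0), seq_nth by lia. repeat split; auto; lia.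
Qed.

Lemma S_l_Prot : forall h l, l < 3 * h -> S_l 3 (6 ^ h) (Prot h) l = 3.
Proof.
  intros h l Hl. destruct (nth_steps h l Hl) as [k [d [Hk [Hd E]]]].
  unfold S_l. rewrite <- (S_stepk h k d Hk Hd) at 3. f_equal. f_equal.
  apply map_ext. intros xs. unfold symbol. rewrite run_Prot.
  rewrite (nth_indep (map (msg xs) (stepsL h)) (0, 0) (msg xs (stepk 0 0)))
    by (rewrite length_map, len_steps; lia).
  rewrite map_nth. simpl steps. rewrite E. reflexivity.
Qed.

Lemma fold_const : forall (c : R) n,
  fold_right Rplus 0%R (map (fun _ : nat => c) (seq 0 n)) = (INR n * c)%R.
Proof.
  intros c n. generalize 0. induction n as [|n IH]; intros s; simpl.
  - ring.
  - rewrite IH. destruct n; simpl; ring.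
Qed.

Lemma complexity_Prot : forall h, complexity 3 (6 ^ h) (Prot h) = (INR h * log2R 27)%R.
Proof.
  intros h. unfold complexity. simpl steps. rewrite len_steps.
  rewrite (map_ext_in _ (fun _ => log2R (INR 3))).
  2:{ intros l Hl. apply in_seq in Hl. rewrite S_l_Prot by lia. reflexivity. }
  rewrite fold_const. rewrite mult_INR.
  unfold log2R. replace 27%R with (3 * (3 * 3))%R by ring.
  rewrite !ln_mult by lra. simpl INR.
  replace (1 + 1 + 1)%R with 3%R by ring. unfold Rdiv. ring.
Qed.

Lemma outF_false : forall h i v r,
  outF h i v r = false <-> r = map (fun d => phi (expk i) (dig d v)) (seq 0 h).
Proof.
  intros. unfold outF. destruct (list_eq_dec Nat.eq_dec r _); split; congruence.
Qed.

Lemma EQ_Prot : forall h xs i, 1 <= i <= 3 ->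
  (EQ (Prot h) xs i = false <->
   forall d, d < h -> phi (expk i) (dig d (inp xs (S (expk i)))) = phi (expk i) (dig d (inp xs i))).
Proof.
  intros h xs i Hi. unfold EQ. simpl out. rewrite outF_false, recv_run by auto.
  split.
  - intros E d Hd. apply (map_eq_pt _ _ _ E). apply in_seq. lia.
  - intros E. apply map_ext_in. intros d Hd. apply in_seq in Hd. apply E. lia.
Qed.

Lemma wf_Prot : forall h, well_formed 3 (Prot h).
Proof.
  intros h. unfold well_formed. apply Forall_forall. intros s Hs. simpl in Hs.
  unfold stepsL in Hs. rewrite !in_app_iff in Hs.
  destruct Hs as [Hs|[Hs|Hs]]; apply in_map_iff in Hs; destruct Hs as [d [<- _]];
  simpl; lia.
Qed.

Lemma dig_lt : forall d v, dig d v < 6.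
Proof. intros. unfold dig. apply Nat.mod_upper_bound. lia. Qed.

Lemma solves_Prot : forall h, solves_MEQ_AD 3 (6 ^ h) (Prot h).
Proof.
  intros h. split; [apply wf_Prot|].
  intros xs [Hlen HF].
  destruct xs as [|x1 [|x2 [|x3 [|x4 xs]]]]; simpl in Hlen; try discriminate.
  inversion HF as [|? ? B1 HF1]; subst. inversion HF1 as [|? ? B2 HF2]; subst.
  inversion HF2 as [|? ? B3 _]; subst.
  split.
  - intros H.
    pose proof (proj1 (EQ_Prot h [x1;x2;x3] 1 ltac:(lia)) (H 1 ltac:(lia))) as E1.
    pose proof (proj1 (EQ_Prot h [x1;x2;x3] 2 ltac:(lia)) (H 2 ltac:(lia))) as E2.
    pose proof (proj1 (EQ_Prot h [x1;x2;x3] 3 ltac:(lia)) (H 3 ltac:(lia))) as E3.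
    simpl in E1, E2, E3. unfold inp in E1, E2, E3. simpl in E1, E2, E3.
    assert (D : forall d, d < h -> dig d x1 = dig d x2 /\ dig d x2 = dig d x3).
    { intros d Hd. apply finite_check; try apply dig_lt.
      - exact (E2 d Hd).
      - exact (E3 d Hd).
      - exact (E1 d Hd). }
    assert (x1 - 1 = x2 - 1).
    { apply (digits_eq h); try lia. intros d Hd. apply (D d Hd). }
    assert (x2 - 1 = x3 - 1).
    { apply (digits_eq h); try lia. intros d Hd. apply (D d Hd). }
    assert (x1 = x2) by lia. assert (x2 = x3) by lia. subst.
    intros i j Hi Hj.
    assert (i = 1 \/ i = 2 \/ i = 3) as Ci by lia.
    assert (j = 1 \/ j = 2 \/ j = 3) as Cj by lia.
    destruct Ci as [Ci|[Ci|Ci]]; destruct Cj as [Cj|[Cj|Cj]]; subst; reflexivity.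
  - intros H i Hi. apply EQ_Prot; auto. intros d Hd. rewrite (H (S (expk i)) i); auto.
    assert (i = 1 \/ i = 2 \/ i = 3) as [Ci|[Ci|Ci]] by lia; subst i; simpl; lia.
Qed.

Local Open Scope R_scope.

Theorem mainTheorem10 : forall h : nat, (1 <= h)%nat ->
  (exists P : protocol,
      solves_MEQ_AD 3 (6 ^ h) P /\ complexity 3 (6 ^ h) P = INR h * log2R 27)
  /\ C_AD_le 3 (6 ^ h) (INR h * log2R 27).
Proof.
  intros h Hh. split.
  - exists (Prot h). split; [apply solves_Prot|apply complexity_Prot].
  - intros r [Hlb _]. rewrite <- complexity_Prot. apply Hlb.
    exists (Prot h). split; [apply solves_Prot|reflexivity].
Qed.
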